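(* Let $R$ be a regular run and let $\alpha>0$ be a moment such that SafeToOpen fails at $\alpha-$ and holds at $\alpha$. Let $\beta=\sup\{t\ge\alpha:\ \text{SafeToOpen holds over }[\alpha,t]\}\in(\alpha,\infty]$. Then (1) Dir = close at $\alpha$; (2) Dir = open over $(\alpha,\beta]$ (over $(\alpha,\infty)$ if $\beta=\infty$) and, if $\beta<\infty$, also at $\beta+$.
   Context: Setting (evolving algebra for the railroad crossing). States are structures over a vocabulary containing: a finite universe Tracks; the reals and ExtendedReals $=\mathbb{R}\cup\{\infty\}$ with standard $<$ and $+$ ($\infty$ largest); a nullary real-valued symbol $\mathrm{CT}$ (current time); positive real constants $d_{close},d_{open},d_{min},d_{max}$ with $d_{close}<d_{min}\le d_{max}$; a unary function TrackStatus from Tracks to $\{\text{empty},\text{coming},\text{incrossing}\}$; a unary function Deadline from Tracks to ExtendedReals; a nullary Dir with values in $\{\text{open},\text{close}\}$; a nullary GateStatus with values in $\{\text{opened},\text{closed}\}$. Put $W=d_{min}-d_{close}$ and $\Delta_{close}=d_{close}+(d_{max}-d_{min})=d_{max}-W$. For a track $x$, $s(x)$ is the condition [$\mathrm{TrackStatus}(x)=\text{empty}$ or $\mathrm{CT}+d_{open}<\mathrm{Deadline}(x)$], and SafeToOpen is $\forall x\in\mathrm{Tracks}\ s(x)$. The program has two modules (agents). Gate: simultaneously OpenGate ''if Dir=open then GateStatus:=opened'' and CloseGate ''if Dir=close then GateStatus:=closed''. Controller: simultaneously, for every track $x$, SetDeadline$(x)$ ''if TrackStatus$(x)$=coming and Deadline$(x)=\infty$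 then Deadline$(x):=\mathrm{CT}+W$'', SignalClose$(x)$ ''if $\mathrm{CT}=$Deadline$(x)$ then Dir:=close'', ClearDeadline$(x)$ ''if TrackStatus$(x)$=empty and Deadline$(x)<\infty$ then Deadline$(x):=\infty$'', together with SignalOpen ''if Dir=close and SafeToOpen then Dir:=open''. Executing a module means computing all updates it generates in the current state and performing them simultaneously (nothing happens if the update set is inconsistent). A module is enabled at a state if its update set is consistent and contains an update that changes the state. TrackStatus is external (changed only by the environment); Deadline, Dir, GateStatus are internal (changed only by the modules); other symbols are static. Runs: for $t\mapsto R(t)$, $t\in[0,\infty)$, let $\rho(t)$ be the reduct of $R(t)$ without CT. $R$ is a pre-run if all $R(t)$ share a superuniverse, $\mathrm{CT}=t$ in $R(t)$, and for every $\tau>0$ there are $0=t_0<\dots<t_n=\tau$ with $\rho$ constant on each $(t_i,t_{i+1})$. For a term $e$ (free variables fixed), $e_t$ is its value in $R(t)$, $e_{t+}$ (resp. $e_{t-}$, $t>0$) its constant value on some $(t,t+\epsilon)$ (resp. $(t-\epsilon,t)$); likewise $\rho(t\pm)$. $e$ holds over an interval if it holds at each point; $e$ becomes (is set to) $a$ at $t$ if $e_{t-}\ne a=e_t$ or $e_t\neq a=e_{t+}$. A pre-run is a run if (i) whenever $\rho(t+)\neq\rho(t)$, $\rho(t+)$ is the CT-free reduct of the result of executing some modules at $R(t)$ (these agents fire at $t$), with external functions equal in $\rho(t)$ and $\rho(t+)$; (ii) whenever $t>0$ and $\rho(t)\ne\rho(t-)$, they differ only in external functions. An agent is immediate if it fires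 at every moment it is enabled; bounded if immediate or there is $b>0$ with no interval $(t,t+b)$ over which it is enabled but never fires. Initial states: TrackStatus$(x)$=empty and Deadline$(x)=\infty$ for every track $x$. A regular run is a run $R$ with $R(0)$ initial such that: (Train Motion) for each track $x$ there is a finite or infinite sequence $0=t_0<t_1<t_2<\cdots$ (the significant moments of $x$) with TrackStatus$(x)$=empty over each $[t_{3i},t_{3i+1})$, =coming over each $[t_{3i+1},t_{3i+2})$ where $d_{min}\le t_{3i+2}-t_{3i+1}\le d_{max}$, =incrossing over each $[t_{3i+2},t_{3i+3})$, and, if the sequence is finite with last element $t_k$, then $3\mid k$ and TrackStatus$(x)$=empty over $[t_k,\infty)$; (Controller Timing) Controller is immediate; (Gate Timing) Gate is bounded, there is no interval $(t,t+d_{close})$ over which Dir=close and GateStatus=opened both hold, and no interval $(t,t+d_{open})$ over which Dir=open and GateStatus=closed both hold. *)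

(* Defs.v *)
From Stdlib Require Import Reals List.
Open Scope R_scope.

(** ExtendedReals = R ∪ {∞}, ∞ largest. *)
Inductive xR : Type := XFin (r : R) | XInf.

Definition xlt (a b : xR) : Prop :=
  match a, b with
  | XFin x, XFin y => x < y
  | XFin _, XInf => True
  | XInf, _ => False
  end.

Definition xle (a b : xR) : Prop :=
  match a, b with
  | XFin x, XFin y => x <= y
  | _, XInf => True
  | XInf, XFin _ => False
  end.

Inductive TStat : Type := Empty | Coming | InCrossing.
Inductive DirV : Type := DOpen | DClose.
Inductive GStat : Type := Opened | Closed.

Record Params : Type := mkParams {
  d_close : R; d_open : R; d_min : R; d_max : R }.

Definition valid_params (P : Params) : Prop :=
  0 < d_close P /\ 0 < d_open P /\ 0 < d_min P /\ 0 < d_max P /\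
  d_close P < d_min P /\ d_min P <= d_max P.

Definition W (P : Params) : R := d_min P - d_close P.

Definition finite_type (T : Type) : Prop := exists l : list T, forall x : T, In x l.

(** CT-free reduct rho(t) of a state R(t): the dynamic functions.
    The full state R(t) is (rho(t), CT = t) together with the statics. *)
Record state (T : Type) : Type := mkState {
  TrackStatus : T -> TStat;
  Deadline : T -> xR;
  Dir : DirV;
  GateStatus : GStat }.
Arguments TrackStatus {T}.
Arguments Deadline {T}.
Arguments Dir {T}.
Arguments GateStatus {T}.

Section Model.
Context {T : Type} (P : Params).

Definition s_track (s : state T) (ct : R) (x : T) : Prop :=
  TrackStatus s x = Empty \/ xlt (XFin (ct + d_open P)) (Deadline s x).

Definition SafeToOpen (s : state T) (ct : R) : Prop := forall x : T, s_track s ct x.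

Inductive Loc : Type := LDeadline (x : T) | LDir | LGate.
Inductive Val : Type := VX (v : xR) | VD (d : DirV) | VG (g : GStat).

Definition loc_val (s : state T) (l : Loc) : Val :=
  match l with
  | LDeadline x => VX (Deadline s x)
  | LDir => VD (Dir s)
  | LGate => VG (GateStatus s)
  end.

Inductive Agent : Type := Gate | Controller.

Definition updates (a : Agent) (s : state T) (ct : R) (l : Loc) (v : Val) : Prop :=
  match a with
  | Gate =>
      (Dir s = DOpen /\ l = LGate /\ v = VG Opened) \/
      (Dir s = DClose /\ l = LGate /\ v = VG Closed)
  | Controller =>
      (exists x, TrackStatus s x = Coming /\ Deadline s x = XInf /\
                 l = LDeadline x /\ v = VX (XFin (ct + W P))) \/
      (exists x, Deadline s x = XFin ct /\ l = LDir /\ v = VD DClose) \/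
      (exists x, TrackStatus s x = Empty /\ xlt (Deadline s x) XInf /\
                 l = LDeadline x /\ v = VX XInf) \/
      (Dir s = DClose /\ SafeToOpen s ct /\ l = LDir /\ v = VD DOpen)
  end.

Definition consistent (U : Loc -> Val -> Prop) : Prop :=
  forall l v1 v2, U l v1 -> U l v2 -> v1 = v2.

Definition enabled (a : Agent) (s : state T) (ct : R) : Prop :=
  consistent (updates a s ct) /\
  exists l v, updates a s ct l v /\ loc_val s l <> v.

(** Each module performs its updates if its update
    set is consistent (nothing happens otherwise); the two modules write disjoint
    locations. *)
Definition exec_upd (S : Agent -> Prop) (s : state T) (ct : R) (l : Loc) (v : Val) : Prop :=
  exists a, S a /\ consistent (updates a s ct) /\ updates a s ct l v.

Definition exec_result (S : Agent -> Prop) (s : state T) (ct : R) (s' : state T) : Prop :=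
  TrackStatus s' = TrackStatus s /\
  forall l : Loc,
    (forall v, exec_upd S s ct l v -> loc_val s' l = v) /\
    ((forall v, ~ exec_upd S s ct l v) -> loc_val s' l = loc_val s l).

(** A (candidate) run is given by its CT-free reducts rho : t |-> rho(t), t >= 0
    (values at t < 0 are irrelevant); R(t) = (rho(t), CT = t). *)
Variable rho : R -> state T.

Definition rlim (t : R) (s : state T) : Prop :=
  exists eps, 0 < eps /\ forall u, t < u < t + eps -> rho u = s.
Definition llim (t : R) (s : state T) : Prop :=
  exists eps, 0 < eps /\ forall u, t - eps < u < t -> rho u = s.

Definition pre_run : Prop :=
  forall tau, 0 < tau ->
    exists (n : nat) (p : nat -> R),
      p 0%nat = 0 /\ p n = tau /\
      (forall i, (i < n)%nat -> p i < p (S i)) /\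
      (forall i, (i < n)%nat -> exists s, forall u, p i < u < p (S i) -> rho u = s).

Definition is_run : Prop :=
  pre_run /\
  (forall t s, 0 <= t -> rlim t s -> s <> rho t ->
     exists S : Agent -> Prop, exec_result S (rho t) t s /\
                               TrackStatus s = TrackStatus (rho t)) /\
  (forall t s, 0 < t -> llim t s -> s <> rho t ->
     Deadline s = Deadline (rho t) /\ Dir s = Dir (rho t) /\
     GateStatus s = GateStatus (rho t)).

Definition fires (a : Agent) (t : R) : Prop :=
  exists s, rlim t s /\ s <> rho t /\
    exists S : Agent -> Prop, S a /\ exec_result S (rho t) t s.

Definition immediate (a : Agent) : Prop :=
  forall t, 0 <= t -> enabled a (rho t) t -> fires a t.

Definition bounded (a : Agent) : Prop :=
  immediate a \/
  exists b, 0 < b /\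
    ~ (exists t, 0 <= t /\
         forall u, t < u < t + b -> enabled a (rho u) u /\ ~ fires a u).

Definition initial (s : state T) : Prop :=
  forall x, TrackStatus s x = Empty /\ Deadline s x = XInf.

(** Index j belongs to the (finite with last index k, or infinite) sequence. *)
Definition in_range (N : option nat) (j : nat) : Prop :=
  match N with None => True | Some k => (j <= k)%nat end.

Definition train_motion (x : T) : Prop :=
  exists (tm : nat -> R) (N : option nat),
    tm 0%nat = 0 /\
    (forall j, in_range N (S j) -> tm j < tm (S j)) /\
    (forall i, in_range N (3 * i + 1) ->
       forall u, tm (3 * i)%nat <= u < tm (3 * i + 1)%nat ->
         TrackStatus (rho u) x = Empty) /\
    (forall i, in_range N (3 * i + 2) ->
       d_min P <= tm (3 * i + 2)%nat - tm (3 * i + 1)%nat <= d_max P /\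
       forall u, tm (3 * i + 1)%nat <= u < tm (3 * i + 2)%nat ->
         TrackStatus (rho u) x = Coming) /\
    (forall i, in_range N (3 * i + 3) ->
       forall u, tm (3 * i + 2)%nat <= u < tm (3 * i + 3)%nat ->
         TrackStatus (rho u) x = InCrossing) /\
    (match N with
     | None => True
     | Some k => (exists m, k = (3 * m)%nat) /\
                 forall u, tm k <= u -> TrackStatus (rho u) x = Empty
     end).

Definition regular_run : Prop :=
  is_run /\
  initial (rho 0) /\
  (forall x, train_motion x) /\
  immediate Controller /\
  bounded Gate /\
  ~ (exists t, 0 <= t /\ forall u, t < u < t + d_close P ->
        Dir (rho u) = DClose /\ GateStatus (rho u) = Opened) /\
  ~ (exists t, 0 <= t /\ forall u, t < u < t + d_open P ->
        Dir (rho u) = DOpen /\ GateStatus (rho u) = Closed).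

Definition safe_upto (alpha t : R) : Prop :=
  alpha <= t /\ forall u, alpha <= u <= t -> SafeToOpen (rho u) u.

Definition is_beta (alpha : R) (beta : xR) : Prop :=
  (beta = XInf /\ forall M, exists t, safe_upto alpha t /\ M < t) \/
  (exists b, beta = XFin b /\ is_lub (safe_upto alpha) b).

End Model.

(* Main.v *)
Require Import Defs.
From Stdlib Require Import Reals Lra Lia Classical.
Open Scope R_scope.

Lemma real_ind (a : R) (Q : R -> Prop) :
  Q a ->
  (forall t, a <= t -> (forall u, a <= u <= t -> Q u) ->
     exists e, 0 < e /\ forall u, t < u < t + e -> Q u) ->
  (forall t, a < t -> (forall u, a <= u < t -> Q u) -> Q t) ->
  forall t, a <= t -> Q t.
Proof.
  intros Ha Hr Hl t0 Ht0.
  destruct (classic (Q t0)) as [|HnQ]; auto. exfalso.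
  set (E := fun x => a <= x /\ forall u, a <= u <= x -> Q u).
  assert (Hb : bound E).
  { exists t0. intros x [Hx1 Hx2]. destruct (Rle_dec x t0); auto.
    exfalso; apply HnQ; apply Hx2; lra. }
  assert (Ea : E a).
  { split; [lra|]. intros u Hu. replace u with a by lra. auto. }
  assert (Hne : exists x, E x) by (exists a; exact Ea).
  destruct (completeness E Hb Hne) as [c [Hub Hlub]].
  assert (Hac : a <= c) by (apply Hub; exact Ea).
  assert (Hbelow : forall u, a <= u < c -> Q u).
  { intros u Hu. destruct (classic (exists x, E x /\ u < x)) as [[x [[_ Hx] Hux]]|Hn].
    - apply Hx; lra.
    - exfalso. assert (c <= u).
      { apply Hlub. intros x Ex. destruct (Rle_dec x u); auto.
        exfalso; apply Hn; exists x; split; auto; lra. }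
      lra. }
  assert (Hc : Q c).
  { destruct (Rle_lt_or_eq_dec a c Hac) as [Hlt|Heq].
    - apply Hl; auto.
    - subst; auto. }
  assert (Hupto : forall u, a <= u <= c -> Q u).
  { intros u Hu. destruct (Rle_lt_or_eq_dec u c) as [Hlt|Heq]; [lra| |].
    - apply Hbelow; lra.
    - subst; auto. }
  destruct (Hr c Hac Hupto) as [e [He Hq]].
  assert (Hce : E (c + e/2)).
  { split; [lra|]. intros u Hu. destruct (Rle_dec u c).
    - apply Hupto; lra.
    - apply Hq; lra. }
  apply Hub in Hce. lra.
Qed.

Lemma part_find (p : nat -> R) (t : R) : p 0%nat = 0 -> 0 <= t ->
  forall m, t < p m -> exists i, (i < m)%nat /\ p i <= t < p (S i).
Proof.
  intros H0 Ht m. induction m as [|m IH]; intros Hm.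
  - lra.
  - destruct (Rlt_dec t (p m)) as [Hl|Hl].
    + destruct (IH Hl) as [i [Hi Hi2]]. exists i; split; auto; lia.
    + exists m; split; [lia|lra].
Qed.

Lemma part_find2 (p : nat -> R) (t : R) : p 0%nat = 0 -> 0 < t ->
  forall m, t <= p m -> exists i, (i < m)%nat /\ p i < t <= p (S i).
Proof.
  intros H0 Ht m. induction m as [|m IH]; intros Hm.
  - lra.
  - destruct (Rle_dec t (p m)) as [Hl|Hl].
    + destruct (IH Hl) as [i [Hi Hi2]]. exists i; split; auto; lia.
    + exists m; split; [lia|lra].
Qed.

Section Run.
Context {T : Type} (P : Params) (rho : R -> state T).
Hypothesis hP : valid_params P.
Hypothesis hreg : regular_run P rho.

Lemma rlim_ex t : 0 <= t -> exists s, rlim rho t s.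
Proof.
  intros Ht. destruct hreg as [[Hpre _] _].
  destruct (Hpre (t+1)) as [n [p [H0 [Hn [Hinc Hc]]]]]; [lra|].
  destruct (part_find p t H0 Ht n) as [i [Hi Hit]]; [rewrite Hn; lra|].
  destruct (Hc i Hi) as [s Hs]. exists s, (p (S i) - t). split; [lra|].
  intros u Hu. apply Hs; lra.
Qed.

Lemma llim_ex t : 0 < t -> exists s, llim rho t s.
Proof.
  intros Ht. destruct hreg as [[Hpre _] _].
  destruct (Hpre (t+1)) as [n [p [H0 [Hn [Hinc Hc]]]]]; [lra|].
  destruct (part_find2 p t H0 Ht n) as [i [Hi Hit]]; [rewrite Hn; lra|].
  destruct (Hc i Hi) as [s Hs]. exists s, (t - p i). split; [lra|].
  intros u Hu. apply Hs; lra.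
Qed.

Lemma rlim_unique t s1 s2 : rlim rho t s1 -> rlim rho t s2 -> s1 = s2.
Proof.
  intros [e1 [He1 H1]] [e2 [He2 H2]].
  rewrite <- (H1 (t + Rmin e1 e2 / 2)), <- (H2 (t + Rmin e1 e2 / 2)); auto;
  pose proof (Rmin_l e1 e2); pose proof (Rmin_r e1 e2);
  assert (0 < Rmin e1 e2) by (apply Rmin_glb_lt; auto); lra.
Qed.

Lemma left_loc t s l : 0 < t -> llim rho t s -> loc_val s l = loc_val (rho t) l.
Proof.
  intros Ht Hs. destruct (classic (s = rho t)) as [E|E]; [subst; auto|].
  destruct hreg as [[_ [_ Hii]] _].
  destruct (Hii t s Ht Hs E) as [A [B C]].
  destruct l; simpl; congruence.
Qed.

Lemma step_val t s l v : 0 <= t -> rlim rho t s -> loc_val (rho t) l = v ->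
  (forall ag w, updates P ag (rho t) t l w -> w = v) -> loc_val s l = v.
Proof.
  intros Ht Hs Hv Hall. destruct (classic (s = rho t)) as [E|E]; [subst; auto|].
  destruct hreg as [[_ [Hi _]] _].
  destruct (Hi t s Ht Hs E) as [S [[_ Hex] _]].
  destruct (Hex l) as [H1 H2].
  destruct (classic (exists w, exec_upd P S (rho t) t l w)) as [[w Hw]|Hn].
  - rewrite (H1 w Hw). destruct Hw as [a [_ [_ Hu]]]. exact (Hall a w Hu).
  - rewrite H2; auto. intros w Hw; apply Hn; eauto.
Qed.

Lemma fire_val t s l v : 0 <= t -> rlim rho t s ->
  consistent (updates P Controller (rho t) t) ->
  updates P Controller (rho t) t l v -> loc_val (rho t) l <> v -> loc_val s l = v.
Proof.
  intros Ht Hs Hc Hu Hne. destruct hreg as [_ [_ [_ [Himm _]]]].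
  destruct (Himm t Ht (conj Hc (ex_intro _ l (ex_intro _ v (conj Hu Hne)))))
    as [s' [Hs' [_ [S [HS Hex]]]]].
  rewrite (rlim_unique _ _ _ Hs Hs'). destruct Hex as [_ Hex].
  destruct (Hex l) as [H1 _]. apply H1. exists Controller; auto.
Qed.

Lemma upd_val t s l v : 0 <= t -> rlim rho t s ->
  (forall ag w, updates P ag (rho t) t l w -> w = v) ->
  (loc_val (rho t) l = v \/
   (consistent (updates P Controller (rho t) t) /\ updates P Controller (rho t) t l v)) ->
  loc_val s l = v.
Proof.
  intros Ht Hs Hall Hor. destruct (classic (loc_val (rho t) l = v)) as [E|E].
  - eapply step_val; eauto.
  - destruct Hor as [|[Hc Hu]]; [contradiction|]. eapply fire_val; eauto.
Qed.

Lemma keep l v a b : 0 <= a -> loc_val (rho a) l = v ->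
  (forall t, a <= t < b -> forall ag w, updates P ag (rho t) t l w -> w = v) ->
  forall t, a <= t <= b -> loc_val (rho t) l = v.
Proof.
  intros Ha Hv Hall t Ht.
  apply (real_ind a (fun t => t <= b -> loc_val (rho t) l = v)); auto; try lra.
  - intros t' Hat IH. destruct (Rlt_dec t' b) as [Hlt|Hge].
    + destruct (rlim_ex t') as [s [e [He Hs]]]; [lra|].
      exists e; split; auto. intros u Hu Hub. rewrite (Hs u Hu).
      apply (step_val t'); try lra.
      * exists e; auto.
      * apply IH; lra.
      * apply Hall; lra.
    + exists 1; split; [lra|]. intros; lra.
  - intros t' Hat IH Htb. destruct (llim_ex t') as [s [e [He Hs]]]; [lra|].
    assert (Rmax a (t' - e) < t') by (apply Rmax_lub_lt; lra).
    pose proof (Rmax_l a (t' - e)). pose proof (Rmax_r a (t' - e)).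
    set (m := Rmax a (t' - e)) in *.
    rewrite <- (left_loc t' s l); [|lra| exists e; auto].
    rewrite <- (Hs ((m + t')/2)); [|lra].
    apply IH; lra.
Qed.

Definition tmotion (x : T) (tm : nat -> R) (N : option nat) : Prop :=
    tm 0%nat = 0 /\
    (forall j, in_range N (S j) -> tm j < tm (S j)) /\
    (forall i, in_range N (3 * i + 1) ->
       forall u, tm (3 * i)%nat <= u < tm (3 * i + 1)%nat ->
         TrackStatus (rho u) x = Empty) /\
    (forall i, in_range N (3 * i + 2) ->
       d_min P <= tm (3 * i + 2)%nat - tm (3 * i + 1)%nat <= d_max P /\
       forall u, tm (3 * i + 1)%nat <= u < tm (3 * i + 2)%nat ->
         TrackStatus (rho u) x = Coming) /\
    (forall i, in_range N (3 * i + 3) ->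
       forall u, tm (3 * i + 2)%nat <= u < tm (3 * i + 3)%nat ->
         TrackStatus (rho u) x = InCrossing) /\
    (match N with
     | None => True
     | Some k => (exists m, k = (3 * m)%nat) /\
                 forall u, tm k <= u -> TrackStatus (rho u) x = Empty
     end).

Lemma tm_of x : exists tm N, tmotion x tm N.
Proof. destruct hreg as [_ [_ [H _]]]. exact (H x). Qed.

Lemma rng_le N a b : in_range N b -> (a <= b)%nat -> in_range N a.
Proof. destruct N; simpl; auto; lia. Qed.

Lemma dec3 j : exists i, (j = 3*i \/ j = 3*i+1 \/ j = 3*i+2)%nat.
Proof.
  induction j as [|j [i [H|[H|H]]]].
  - exists 0%nat; lia.
  - exists i; lia.
  - exists i; lia.
  - exists (S i); lia.
Qed.

Definition nextS (s : TStat) := match s with Empty => Coming | Coming => InCrossing | InCrossing => Empty end.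
Fixpoint ps (j : nat) : TStat := match j with O => Empty | S j' => nextS (ps j') end.

Lemma ps3 i : ps (3*i) = Empty /\ ps (3*i+1) = Coming /\ ps (3*i+2) = InCrossing.
Proof.
  assert (E : ps (3*i) = Empty).
  { induction i as [|i IH]; [reflexivity|].
    replace (3 * S i)%nat with (S (S (S (3*i)))) by lia.
    change (ps (S (S (S (3*i))))) with (nextS (nextS (nextS (ps (3*i))))). rewrite IH. reflexivity. }
  split; auto.
  replace (3*i+1)%nat with (S (3*i)) by lia. replace (3*i+2)%nat with (S (S (3*i))) by lia.
  change (ps (S (3*i))) with (nextS (ps (3*i))).
  change (ps (S (S (3*i)))) with (nextS (nextS (ps (3*i)))). rewrite E. auto.
Qed.

Section Track.
Variables (x : T) (tm : nat -> R) (N : option nat).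
Hypothesis Htm : tmotion x tm N.

Lemma mono : forall a b, (a < b)%nat -> in_range N b -> tm a < tm b.
Proof.
  destruct Htm as [_ [Hinc _]].
  intros a b; induction b as [|b IH]; intros Hab Hr; [lia|].
  assert (tm b < tm (S b)) by (apply Hinc; auto).
  destruct (Nat.eq_dec a b) as [->|Hne]; auto.
  assert (tm a < tm b) by (apply IH; [lia| eapply rng_le; eauto]). lra.
Qed.

Lemma tm_nonneg j : in_range N j -> 0 <= tm j.
Proof.
  intros Hr. destruct j as [|j].
  - destruct Htm as [H0 _]; lra.
  - destruct Htm as [H0 _]. pose proof (mono 0 (S j) ltac:(lia) Hr). lra.
Qed.

Lemma rng_up i r : (0 < r <= 2)%nat -> in_range N (3*i+r) -> in_range N (3*i+3).
Proof.
  destruct Htm as [_ [_ [_ [_ [_ Hl]]]]]. destruct N as [k|]; simpl; auto.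
  destruct Hl as [[m Hm] _]. lia.
Qed.

Lemma status_phase j u : in_range N j -> tm j <= u -> (in_range N (S j) -> u < tm (S j)) ->
  TrackStatus (rho u) x = ps j.
Proof.
  intros Hr H1 H2. destruct Htm as [H0 [Hinc [He [Hc [Hi Hl]]]]].
  destruct (dec3 j) as [i [ -> | [ -> | -> ]]]; destruct (ps3 i) as [P0 [P1 P2]].
  - rewrite P0. destruct (classic (in_range N (3*i+1))) as [Hr1|Hr1].
    + apply (He i Hr1). split; auto. rewrite Nat.add_1_r. apply H2. rewrite <- Nat.add_1_r; auto.
    + destruct N as [k|]; simpl in Hr1, Hr; [|tauto].
      destruct Hl as [_ Hl]. apply Hl. replace k with (3*i)%nat by lia. auto.
  - rewrite P1. assert (Hr2 : in_range N (3*i+2)) by (eapply rng_le; [eapply (rng_up i 1); eauto; lia| lia]).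
    apply (Hc i Hr2). split; auto. replace (3*i+2)%nat with (S (3*i+1)) by lia. apply H2.
    replace (S (3*i+1)) with (3*i+2)%nat by lia; auto.
  - rewrite P2. assert (Hr3 : in_range N (3*i+3)) by (eapply (rng_up i 2); eauto; lia).
    apply (Hi i Hr3). split; auto. replace (3*i+3)%nat with (S (3*i+2)) by lia. apply H2.
    replace (S (3*i+2)) with (3*i+3)%nat by lia; auto.
Qed.

Lemma tm_lower : N = None -> forall i, INR i * d_min P <= tm (3*i).
Proof.
  intros HN. destruct Htm as [H0 [Hinc [He [Hc [Hi Hl]]]]]. subst N.
  induction i as [|i IH].
  - simpl. rewrite H0. lra.
  - rewrite S_INR. 
    assert (A1 : tm (3*i)%nat < tm (3*i+1)%nat) by (rewrite Nat.add_1_r; apply Hinc; exact I).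
    destruct (Hc i I) as [[A2 _] _].
    assert (A3 : tm (3*i+2)%nat < tm (3*i+3)%nat)
      by (replace (3*i+3)%nat with (S (3*i+2)) by lia; apply Hinc; exact I).
    replace (3 * S i)%nat with (3*i+3)%nat by lia. lra.
Qed.

Lemma coverage t : 0 < t ->
  (exists j, in_range N (S j) /\ tm j < t <= tm (S j)) \/ (exists k, N = Some k /\ tm k < t).
Proof.
  intros Ht.
  assert (Hfind : forall n, in_range N n -> t <= tm n ->
            exists j, in_range N (S j) /\ tm j < t <= tm (S j)).
  { induction n as [|n IH]; intros Hr Hn.
    - destruct Htm as [H0 _]; lra.
    - destruct (Rle_dec t (tm n)) as [Hl|Hl].
      + apply IH; auto. eapply rng_le; eauto.
      + exists n; split; auto; lra. }
  assert (Hunb : N = None -> exists n, t <= tm (3*n)%nat).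
  { intros HN. destruct hP as [_ [_ [Hd _]]].
    destruct (INR_archimed (d_min P) t Hd) as [n Hn]. exists n.
    pose proof (tm_lower HN n). lra. }
  destruct N as [k|] eqn:EN.
  - destruct (Rlt_dec (tm k) t) as [Hl|Hl].
    + right; exists k; auto.
    + left. apply (Hfind k); simpl; auto; lra.
  - left. destruct (Hunb eq_refl) as [n Hn].
    apply (Hfind (3*n)%nat); [exact I|]. auto.
Qed.

Lemma sc j t e s : in_range N (S j) -> t < tm (S j) -> tm (S j) < t + e ->
  (forall u, t < u < t + e -> rho u = s) -> False.
Proof.
  intros Hr H1 H2 Hs.
  assert (Hm : tm j < tm (S j)) by (apply mono; auto).
  assert (Rmax t (tm j) < tm (S j)) by (apply Rmax_lub_lt; lra).
  pose proof (Rmax_l t (tm j)). pose proof (Rmax_r t (tm j)).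
  set (m := Rmax t (tm j)) in *.
  assert (A : TrackStatus (rho ((m + tm (S j))/2)) x = ps j).
  { apply status_phase; [eapply rng_le; eauto | lra | intros; lra]. }
  assert (B : TrackStatus (rho (tm (S j))) x = ps (S j)).
  { apply status_phase; auto; [lra|]. intros Hr2. apply mono; auto. }
  rewrite Hs in A by lra. rewrite Hs in B by lra. rewrite A in B. simpl in B.
  destruct (ps j); discriminate.
Qed.

End Track.

Definition pdl (tm : nat -> R) (j : nat) (d : xR) : Prop :=
  (exists i, j = (3*i)%nat /\ d = XInf) \/
  (exists i, (j = 3*i+1 \/ j = 3*i+2)%nat /\ d = XFin (tm (3*i+1)%nat + W P)).

Definition Inv x tm N t : Prop :=
  (forall j d, in_range N (S j) -> tm j < t <= tm (S j) -> pdl tm j d -> Deadline (rho t) x = d) /\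
  (forall k, N = Some k -> tm k < t -> Deadline (rho t) x = XInf).

Definition Qat t := forall x tm N, tmotion x tm N -> Inv x tm N t.

Lemma pdl_0 tm i d : pdl tm (3*i) d -> d = XInf.
Proof. intros [[i' [Hj Hd]]|[i' [Hj Hd]]]; auto; lia. Qed.

Lemma pdl_12 tm i r d : (r = 1 \/ r = 2)%nat -> pdl tm (3*i+r) d ->
  d = XFin (tm (3*i+1)%nat + W P).
Proof.
  intros Hr [[i' [Hj Hd]]|[i' [Hj Hd]]]; [lia|].
  assert (i' = i) by lia. subst; auto.
Qed.

Lemma DL_core x tm N i t : tmotion x tm N -> in_range N (3*i+3) ->
  tm (3*i+1)%nat < t <= tm (3*i+3)%nat -> (forall u, 0 <= u <= t -> Qat u) ->
  (forall u, tm (3*i+1)%nat < u <= t -> Deadline (rho u) x = XFin (tm (3*i+1)%nat + W P)) /\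
  (forall u, tm (3*i+1)%nat <= u < t -> TrackStatus (rho u) x <> Empty) /\
  (forall u, tm (3*i+1)%nat <= u <= t -> u < tm (3*i+1)%nat + d_min P ->
     TrackStatus (rho u) x = Coming).
Proof.
  intros Htm Hr3 [Hct Htt] HQ.
  assert (Hr2 : in_range N (3*i+2)) by (eapply rng_le; eauto; lia).
  assert (Hr1 : in_range N (3*i+1)) by (eapply rng_le; eauto; lia).
  pose proof (tm_nonneg x tm N Htm _ Hr1) as Hc0.
  assert (Hdm : d_min P <= tm (3*i+2)%nat - tm (3*i+1)%nat).
  { destruct Htm as [_ [_ [_ [Hc _]]]]. apply (Hc i Hr2). }
  destruct hP as [_ [_ [Hdmin _]]].
  assert (E2 : S (3*i+1) = (3*i+2)%nat) by lia.
  assert (E3 : S (3*i+2) = (3*i+3)%nat) by lia.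
  destruct (ps3 i) as [P0 [P1 P2]].
  split; [|split].
  - intros u [Hu1 Hu2]. destruct (HQ u ltac:(lra) x tm N Htm) as [Hph _].
    destruct (Rle_dec u (tm (3*i+2)%nat)).
    + apply (Hph (3*i+1)%nat); [rewrite E2; auto | rewrite E2; lra | right; exists i; auto].
    + apply (Hph (3*i+2)%nat); [rewrite E3; auto | rewrite E3; lra | right; exists i; auto].
  - intros u [Hu1 Hu2]. destruct (Rlt_dec u (tm (3*i+2)%nat)).
    + rewrite (status_phase x tm N Htm (3*i+1) u); auto; [rewrite P1; discriminate|].
      rewrite E2; auto.
    + rewrite (status_phase x tm N Htm (3*i+2) u); auto; [rewrite P2; discriminate|lra|].
      rewrite E3; lra.
  - intros u [Hu1 Hu2] Hu3.
    rewrite (status_phase x tm N Htm (3*i+1) u); auto. rewrite E2; lra.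
Qed.

Lemma DL t x D : 0 <= t -> (forall u, 0 <= u <= t -> Qat u) -> Deadline (rho t) x = XFin D ->
  exists c, 0 <= c < t /\ D = c + W P /\
  (forall u, c < u <= t -> Deadline (rho u) x = XFin D) /\
  (forall u, c <= u < t -> TrackStatus (rho u) x <> Empty) /\
  (forall u, c <= u <= t -> u < c + d_min P -> TrackStatus (rho u) x = Coming).
Proof.
  intros Ht HQ HD.
  destruct (Rle_lt_or_eq_dec 0 t Ht) as [Ht'|Ht'].
  2:{ subst t. destruct hreg as [_ [Hinit _]]. destruct (Hinit x) as [_ H]. congruence. }
  destruct (tm_of x) as [tm [N Htm]].
  destruct (HQ t (conj Ht (Rle_refl t)) x tm N Htm) as [Hph Htail].
  destruct (coverage x tm N Htm t Ht') as [[j [Hr [H1 H2]]]|[k [Hk Hkt]]].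
  2:{ rewrite (Htail k Hk Hkt) in HD; discriminate. }
  destruct (dec3 j) as [i [Hj|[Hj|Hj]]]; subst j.
  - rewrite (Hph (3*i)%nat XInf Hr) in HD; [discriminate| lra | left; exists i; auto].
  - rewrite (Hph (3*i+1)%nat (XFin (tm (3*i+1)%nat + W P)) Hr) in HD;
      [| lra | right; exists i; auto].
    injection HD as HD.
    assert (Hr3 : in_range N (3*i+3)) by (eapply (rng_up x tm N Htm i 1); [lia|]; eapply rng_le; eauto; lia).
    assert (tm (3*i+2)%nat < tm (3*i+3)%nat) by (apply (mono x tm N Htm); auto; lia).
    replace (S (3*i+1)) with (3*i+2)%nat in H2 by lia.
    destruct (DL_core x tm N i t Htm Hr3 ltac:(lra) HQ) as [A [B C]].
    exists (tm (3*i+1)%nat). pose proof (tm_nonneg x tm N Htm (3*i+1) (rng_le N (3*i+1) _ Hr ltac:(lia))).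
    subst D. repeat split; auto; lra.
  - rewrite (Hph (3*i+2)%nat (XFin (tm (3*i+1)%nat + W P)) Hr) in HD;
      [| lra | right; exists i; auto].
    injection HD as HD.
    replace (S (3*i+2)) with (3*i+3)%nat in Hr, H2 by lia.
    assert (tm (3*i+1)%nat < tm (3*i+2)%nat) by (apply (mono x tm N Htm); [lia|]; eapply rng_le; eauto; lia).
    destruct (DL_core x tm N i t Htm Hr ltac:(lra) HQ) as [A [B C]].
    exists (tm (3*i+1)%nat). pose proof (tm_nonneg x tm N Htm (3*i+1) (rng_le N (3*i+1) _ Hr ltac:(lia))).
    subst D. repeat split; auto; lra.
Qed.

Lemma no_conflict t x : 0 <= t -> (forall u, 0 <= u <= t -> Qat u) ->
  Deadline (rho t) x = XFin t -> SafeToOpen P (rho t) t -> False.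
Proof.
  intros Ht HQ HD HS. destruct (HS x) as [He|Hl].
  - destruct (DL t x t Ht HQ HD) as [c [Hc [Ec [_ [_ Hco]]]]].
    destruct hP as [Hdc [_ [_ [_ [Hcm _]]]]]. unfold W in Ec.
    rewrite Hco in He; [discriminate|lra|lra].
  - rewrite HD in Hl. simpl in Hl. destruct hP as [_ [Hdo _]]. lra.
Qed.

Lemma cons_ctrl t : 0 <= t -> (forall u, 0 <= u <= t -> Qat u) ->
  consistent (updates P Controller (rho t) t).
Proof.
  intros Ht HQ l v1 v2 H1 H2. simpl in H1, H2.
  destruct H1 as [[x1 [A1 [B1 [C1 D1]]]]|[[x1 [A1 [C1 D1]]]|[[x1 [A1 [B1 [C1 D1]]]]|[A1 [B1 [C1 D1]]]]]];
  destruct H2 as [[x2 [A2 [B2 [C2 D2]]]]|[[x2 [A2 [C2 D2]]]|[[x2 [A2 [B2 [C2 D2]]]]|[A2 [B2 [C2 D2]]]]]];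
  subst; try discriminate; try congruence.
  - exfalso; eapply no_conflict; eauto.
  - exfalso; eapply no_conflict; eauto.
Qed.

Ltac ctrl_cases Hu :=
  destruct Hu as [[?x1 [?A1 [?B1 [?C1 ?D1]]]]|[[?x1 [?A1 [?C1 ?D1]]]|[[?x1 [?A1 [?B1 [?C1 ?D1]]]]|[?A1 [?B1 [?C1 ?D1]]]]]].

Lemma Q_all : forall t, 0 <= t -> Qat t.
Proof.
  apply real_ind.
  - intros x tm N Htm. split.
    + intros j d Hr [H1 _].
      pose proof (tm_nonneg x tm N Htm j (rng_le N j (S j) Hr ltac:(lia))). lra.
    + intros k Hk H1. assert (Hk' : in_range N k) by (rewrite Hk; simpl; lia).
      pose proof (tm_nonneg x tm N Htm k Hk'). lra.
  - intros t Ht IH. destruct (rlim_ex t Ht) as [s [e [He Hs]]].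
    assert (Hcons := cons_ctrl t Ht IH).
    assert (Hrl : rlim rho t s) by (exists e; auto).
    assert (Hempty : forall x, TrackStatus (rho t) x = Empty -> Deadline s x = XInf).
    { intros x Hx. enough (E : loc_val s (LDeadline x) = VX XInf) by (injection E as E; exact E).
      apply (upd_val t); auto.
      - intros ag w Hu. destruct ag; simpl in Hu.
        + destruct Hu as [[_ [Hl _]]|[_ [Hl _]]]; discriminate.
        + ctrl_cases Hu; subst; try discriminate; try congruence.
      - destruct (Deadline (rho t) x) as [r|] eqn:E.
        + right. split; auto. simpl. right; right; left. exists x. rewrite E. simpl.
          repeat split; auto.
        + left. simpl. rewrite E. auto. }
    exists e; split; auto. intros u Hu x tm N Htm. unfold Inv. rewrite (Hs u Hu). split.
    + intros j d Hr [Hju Huj] Hpd.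
      destruct (Rlt_dec t (tm j)) as [Hlt|Hge].
      * exfalso. destruct j as [|j'].
        { destruct Htm as [H0 _]; lra. }
        apply (sc x tm N Htm j' t e s (rng_le N (S j') _ Hr ltac:(lia)) Hlt); [lra|exact Hs].
      * assert (Htj : tm j <= t < tm (S j)) by lra.
        destruct (ps3 0) as [_ _]. 
        destruct (dec3 j) as [i [Hj|[Hj|Hj]]]; subst j; destruct (ps3 i) as [P0 [P1 P2]].
        -- rewrite (pdl_0 _ _ _ Hpd). apply Hempty.
           rewrite (status_phase x tm N Htm (3*i) t); [auto | eapply rng_le; eauto | lra | intros; lra].
        -- rewrite (pdl_12 _ i 1 _ (or_introl eq_refl) Hpd).
           assert (Hst : TrackStatus (rho t) x = Coming).
           { rewrite (status_phase x tm N Htm (3*i+1) t); [auto | eapply rng_le; eauto | lra | intros; lra]. }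
           enough (E : loc_val s (LDeadline x) = VX (XFin (tm (3*i+1)%nat + W P)))
             by (injection E as E; exact E).
           destruct (Rle_lt_or_eq_dec _ _ (proj1 Htj)) as [Hgt|Heq].
           ++ assert (HD : Deadline (rho t) x = XFin (tm (3*i+1)%nat + W P)).
              { apply (proj1 (IH t (conj Ht (Rle_refl t)) x tm N Htm) (3*i+1)%nat);
                  [auto | lra | right; exists i; auto]. }
              apply (upd_val t); auto; [|left; cbn [loc_val]; rewrite HD; auto].
              intros ag w Hu'. destruct ag; simpl in Hu'.
              ** destruct Hu' as [[_ [Hl _]]|[_ [Hl _]]]; discriminate.
              ** ctrl_cases Hu'; subst; try discriminate; try congruence.
           ++ assert (HD : Deadline (rho t) x = XInf).
              { apply (proj1 (IH t (conj Ht (Rle_refl t)) x tm N Htm) (3*i)%nat).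
                - eapply rng_le; eauto; lia.
                - rewrite Nat.add_1_r in Heq. split; [|lra].
                  rewrite <- Heq. apply (mono x tm N Htm); [lia|]. eapply rng_le; eauto; lia.
                - left; exists i; auto. }
              apply (upd_val t); auto.
              ** intros ag w Hu'. destruct ag; simpl in Hu'.
                 --- destruct Hu' as [[_ [Hl _]]|[_ [Hl _]]]; discriminate.
                 --- ctrl_cases Hu'; subst; try discriminate; try congruence.
              ** right. split; auto. cbn [updates]. left. exists x. rewrite Heq. repeat split; auto.
        -- rewrite (pdl_12 _ i 2 _ (or_intror eq_refl) Hpd).
           assert (Hst : TrackStatus (rho t) x = InCrossing).
           { rewrite (status_phase x tm N Htm (3*i+2) t); [auto | eapply rng_le; eauto | lra | intros; lra]. }
           enough (E : loc_val s (LDeadline x) = VX (XFin (tm (3*i+1)%nat + W P)))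
             by (injection E as E; exact E).
           assert (HD : Deadline (rho t) x = XFin (tm (3*i+1)%nat + W P)).
           { destruct (Rle_lt_or_eq_dec _ _ (proj1 Htj)) as [Hgt|Heq].
             - apply (proj1 (IH t (conj Ht (Rle_refl t)) x tm N Htm) (3*i+2)%nat);
                 [auto | lra | right; exists i; auto].
             - apply (proj1 (IH t (conj Ht (Rle_refl t)) x tm N Htm) (3*i+1)%nat).
               + eapply rng_le; eauto; lia.
               + replace (S (3*i+1)) with (3*i+2)%nat by lia. split; [|lra].
                 rewrite <- Heq. apply (mono x tm N Htm); [lia|]. eapply rng_le; eauto; lia.
               + right; exists i; auto. }
           apply (upd_val t); auto; [|left; cbn [loc_val]; rewrite HD; auto].
           intros ag w Hu'. destruct ag; simpl in Hu'.
           ** destruct Hu' as [[_ [Hl _]]|[_ [Hl _]]]; discriminate.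
           ** ctrl_cases Hu'; subst; try discriminate; try congruence.
    + intros k Hk Hku. destruct (Rlt_dec t (tm k)) as [Hlt|Hge].
      * exfalso. destruct k as [|k'].
        { destruct Htm as [H0 _]; lra. }
        apply (sc x tm N Htm k' t e s); [rewrite Hk; simpl; lia | auto | lra | exact Hs].
      * apply Hempty. destruct Htm as [_ [_ [_ [_ [_ Hl]]]]]. rewrite Hk in Hl.
        destruct Hl as [_ Hl]. apply Hl; lra.
  - intros t Ht IH x tm N Htm. destruct (llim_ex t Ht) as [sL [e [He Hs]]].
    assert (HDl : Deadline sL x = Deadline (rho t) x).
    { pose proof (left_loc t sL (LDeadline x) Ht (ex_intro _ e (conj He Hs))) as E.
      injection E as E; exact E. }
    split.
    + intros j d Hr [H1 H2] Hpd.
      assert (Rmax (tm j) (t - e) < t) by (apply Rmax_lub_lt; lra).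
      pose proof (Rmax_l (tm j) (t - e)). pose proof (Rmax_r (tm j) (t - e)).
      pose proof (tm_nonneg x tm N Htm j (rng_le N j (S j) Hr ltac:(lia))).
      set (m := Rmax (tm j) (t - e)) in *.
      rewrite <- HDl, <- (Hs ((m + t)/2)) by lra.
      apply (proj1 (IH ((m+t)/2) ltac:(lra) x tm N Htm) j d Hr); auto; lra.
    + intros k Hk H1.
      assert (Hk' : in_range N k) by (rewrite Hk; simpl; lia).
      assert (Rmax (tm k) (t - e) < t) by (apply Rmax_lub_lt; lra).
      pose proof (Rmax_l (tm k) (t - e)). pose proof (Rmax_r (tm k) (t - e)).
      pose proof (tm_nonneg x tm N Htm k Hk').
      set (m := Rmax (tm k) (t - e)) in *.
      rewrite <- HDl, <- (Hs ((m + t)/2)) by lra.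
      apply (proj2 (IH ((m+t)/2) ltac:(lra) x tm N Htm) k Hk); lra.
Qed.

Lemma HQt t : 0 <= t -> forall u, 0 <= u <= t -> Qat u.
Proof. intros _ u Hu. apply Q_all; lra. Qed.

Lemma dir_upd t w ag : updates P ag (rho t) t LDir w ->
  (w = VD DClose /\ exists x, Deadline (rho t) x = XFin t) \/
  (w = VD DOpen /\ SafeToOpen P (rho t) t).
Proof.
  intros Hu. destruct ag; simpl in Hu.
  - destruct Hu as [[_ [Hl _]]|[_ [Hl _]]]; discriminate.
  - ctrl_cases Hu; subst; try discriminate.
    + left; split; eauto.
    + right; split; auto.
Qed.

Lemma main (alpha : R) (halpha : 0 < alpha)
  (hfail : exists eps, 0 < eps /\
             forall u, alpha - eps < u < alpha -> ~ SafeToOpen P (rho u) u)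
  (hsafe : SafeToOpen P (rho alpha) alpha)
  (beta : xR) (hbeta : is_beta P rho alpha beta) :
  Dir (rho alpha) = DClose /\
  (forall u, alpha < u -> xle (XFin u) beta -> Dir (rho u) = DOpen) /\
  (forall b, beta = XFin b ->
     exists eps, 0 < eps /\ forall u, b < u < b + eps -> Dir (rho u) = DOpen).
Proof.
  destruct hP as [Hdc [Hdo [Hdmin [Hdmax [Hcm Hmm]]]]].
  assert (HW : W P < d_min P) by (unfold W; lra).
  assert (HW0 : 0 < W P) by (unfold W; lra).
  assert (Hclose : Dir (rho alpha) = DClose).
  { destruct hfail as [eps0 [Heps0 Hf]].
    destruct (llim_ex alpha halpha) as [sL [eL [HeL HsL]]].
    pose proof (Rmin_l eps0 eL). pose proof (Rmin_r eps0 eL).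
    assert (0 < Rmin eps0 eL) by (apply Rmin_glb_lt; auto).
    set (u0 := alpha - Rmin eps0 eL / 2).
    assert (Hu0 : rho u0 = sL) by (apply HsL; unfold u0; lra).
    assert (Hnot : ~ SafeToOpen P (rho u0) u0) by (apply Hf; unfold u0; lra).
    destruct (not_all_ex_not _ _ Hnot) as [x0 Hx0].
    assert (HDeq : Deadline (rho u0) x0 = Deadline (rho alpha) x0).
    { pose proof (left_loc alpha sL (LDeadline x0) halpha (ex_intro _ eL (conj HeL HsL))) as E.
      simpl in E. rewrite Hu0. congruence. }
    unfold s_track in Hx0.
    assert (Hemp : TrackStatus (rho alpha) x0 = Empty).
    { destruct (hsafe x0) as [Hq|Hq]; auto. exfalso. apply Hx0. right.
      rewrite HDeq. destruct (Deadline (rho alpha) x0); simpl in *; auto.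
      unfold u0 in *; lra. }
    destruct (Deadline (rho alpha) x0) as [D|] eqn:ED.
    2:{ exfalso. apply Hx0. right. rewrite HDeq. simpl. auto. }
    destruct (DL alpha x0 D ltac:(lra) (HQt alpha ltac:(lra)) ED)
      as [c [Hc [ED' [Hdl [Hne Hco]]]]].
    assert (Hac : c + d_min P <= alpha).
    { destruct (Rle_dec (c + d_min P) alpha) as [|Hn]; auto.
      exfalso. rewrite Hco in Hemp; [discriminate|lra|lra]. }
    assert (HDD : Deadline (rho D) x0 = XFin D) by (apply Hdl; lra).
    destruct (rlim_ex D) as [sD [eD [HeD HsD]]]; [lra|].
    assert (HsDc : loc_val sD LDir = VD DClose).
    { apply (upd_val D); [lra | exists eD; auto | |].
      - intros ag w Hu. destruct (dir_upd _ _ _ Hu) as [[-> _]|[-> HS]]; auto.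
        exfalso. destruct (HS x0) as [He|Hl].
        + apply (Hne D); auto; lra.
        + rewrite HDD in Hl. simpl in Hl. lra.
      - right. split; [apply cons_ctrl; [lra|apply HQt; lra]|].
        cbn [updates]. right; left. exists x0. repeat split; auto. }
    pose proof (Rmin_l eD (alpha - D)). pose proof (Rmin_r eD (alpha - D)).
    assert (0 < Rmin eD (alpha - D)) by (apply Rmin_glb_lt; lra).
    set (a := D + Rmin eD (alpha - D) / 2).
    assert (Hk : loc_val (rho alpha) LDir = VD DClose).
    { apply (keep LDir (VD DClose) a alpha); [unfold a; lra | | | unfold a; lra].
      - rewrite (HsD a); auto. unfold a; lra.
      - intros t Ht ag w Hu. destruct (dir_upd _ _ _ Hu) as [[-> _]|[-> HS]]; auto.
        exfalso. destruct (HS x0) as [He|Hl].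
        + apply (Hne t); auto; unfold a in Ht; lra.
        + rewrite (Hdl t) in Hl; [|unfold a in Ht; lra]. simpl in Hl. unfold a in Ht; lra. }
    simpl in Hk. congruence. }
  split; auto.
  destruct (rlim_ex alpha) as [sA [eA [HeA HsA]]]; [lra|].
  assert (HsAo : loc_val sA LDir = VD DOpen).
  { apply (upd_val alpha); [lra | exists eA; auto | |].
    - intros ag w Hu. destruct (dir_upd _ _ _ Hu) as [[-> [x Hx]]|[-> _]]; auto.
      exfalso. eapply (no_conflict alpha x); eauto; [lra | apply HQt; lra].
    - right. split; [apply cons_ctrl; [lra|apply HQt; lra]|].
      cbn [updates]. right; right; right. repeat split; auto. }
  assert (HopenA : forall u, alpha < u < alpha + eA -> Dir (rho u) = DOpen).
  { intros u Hu. rewrite (HsA u Hu). simpl in HsAo. congruence. }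
  assert (Hext : forall b, (forall t, alpha < t < b -> exists t', safe_upto P rho alpha t' /\ t < t') ->
             forall u, alpha < u <= b -> Dir (rho u) = DOpen).
  { intros b Hb u Hu. destruct (Rlt_dec u (alpha + eA)) as [Hl|Hl]; [apply HopenA; lra|].
    assert (Hk : loc_val (rho u) LDir = VD DOpen).
    { apply (keep LDir (VD DOpen) (alpha + eA/2) b); [lra | | | lra].
      - cbn [loc_val]. rewrite HopenA; auto; lra.
      - intros t Ht ag w Hu'. destruct (dir_upd _ _ _ Hu') as [[-> [x Hx]]|[-> _]]; auto.
        exfalso. destruct (Hb t ltac:(lra)) as [t' [[Ht'1 Ht'2] Ht'3]].
        eapply (no_conflict t x); eauto; [lra | apply HQt; lra | apply Ht'2; lra]. }
    simpl in Hk. congruence. }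
  assert (Hsa : safe_upto P rho alpha alpha).
  { split; [lra|]. intros u Hu. replace u with alpha by lra. auto. }
  destruct hbeta as [[Hb HM]|[b [Hb Hlub]]]; subst beta.
  - split.
    + intros u Hu _. apply (Hext u); [|lra].
      intros t _. destruct (HM t) as [t' [H1 H2]]. eauto.
    + intros b Hb; discriminate.
  - assert (Hab : alpha <= b) by (apply (proj1 Hlub); auto).
    assert (Hfact : forall t, t < b -> exists t', safe_upto P rho alpha t' /\ t < t').
    { intros t Ht. destruct (classic (exists t', safe_upto P rho alpha t' /\ t < t')) as [|Hn]; auto.
      exfalso. assert (b <= t); [|lra].
      apply (proj2 Hlub). intros y Hy. destruct (Rle_dec y t); auto.
      exfalso; apply Hn; exists y; split; auto; lra. }
    split.
    + intros u Hu Hub. simpl in Hub. apply (Hext b); [|lra].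
      intros t Ht. apply Hfact; lra.
    + intros b0 Hb0. injection Hb0 as <-.
      destruct (Rle_lt_or_eq_dec _ _ Hab) as [Hlt|Heq].
      2:{ subst b. exists eA; split; auto. }
      assert (Hdb : Dir (rho b) = DOpen) by (apply (Hext b); [intros; apply Hfact; lra | lra]).
      destruct (rlim_ex b) as [sB [eB [HeB HsB]]]; [lra|].
      assert (HsBo : loc_val sB LDir = VD DOpen).
      { apply (upd_val b); [lra | exists eB; auto | |left; simpl; rewrite Hdb; auto].
        intros ag w Hu. destruct (dir_upd _ _ _ Hu) as [[-> [x Hx]]|[-> _]]; auto.
        exfalso.
        destruct (DL b x b ltac:(lra) (HQt b ltac:(lra)) Hx) as [c [Hc [Ec [Hdl [_ Hco]]]]].
        pose proof (Rmin_l (W P) (d_open P)). pose proof (Rmin_r (W P) (d_open P)).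
        assert (0 < Rmin (W P) (d_open P)) by (apply Rmin_glb_lt; lra).
        pose proof (Rmin_l (b - alpha) (Rmin (W P) (d_open P))).
        pose proof (Rmin_r (b - alpha) (Rmin (W P) (d_open P))).
        assert (0 < Rmin (b - alpha) (Rmin (W P) (d_open P))) by (apply Rmin_glb_lt; lra).
        set (ep := Rmin (b - alpha) (Rmin (W P) (d_open P))) in *.
        destruct (Hfact (b - ep) ltac:(lra)) as [t' [[Ht'1 Ht'2] Ht'3]].
        assert (Ht'b : t' <= b).
        { apply (proj1 Hlub). split; auto. }
        destruct (Ht'2 t' ltac:(lra) x) as [He|Hl].
        - rewrite Hco in He; [discriminate|lra|lra].
        - rewrite (Hdl t') in Hl; [|lra]. simpl in Hl. lra. }
      exists eB; split; auto. intros u Hu. rewrite (HsB u Hu). simpl in HsBo. congruence.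
Qed.


End Run.

Theorem mainTheorem7 (T : Type) (P : Params) (rho : R -> state T)
  (hP : valid_params P) (hT : finite_type T)
  (hreg : regular_run P rho)
  (alpha : R) (halpha : 0 < alpha)
  (hfail : exists eps, 0 < eps /\
             forall u, alpha - eps < u < alpha -> ~ SafeToOpen P (rho u) u)
  (hsafe : SafeToOpen P (rho alpha) alpha)
  (beta : xR) (hbeta : is_beta P rho alpha beta) :
  Dir (rho alpha) = DClose /\
  (forall u, alpha < u -> xle (XFin u) beta -> Dir (rho u) = DOpen) /\
  (forall b, beta = XFin b ->
     exists eps, 0 < eps /\ forall u, b < u < b + eps -> Dir (rho u) = DOpen).
Proof.
  exact (main P rho hP hreg alpha halpha hfail hsafe beta hbeta).
Qed.
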